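(* Let $f:\mathbb{N}\to\mathbb{R}$ be a function with the following property: for every positive integer $h$, every asymptotic basis $A$ with $G(A)\le h$, and every finite subset $X\subseteq A$ such that $A\setminus X$ is an asymptotic basis (i.e. $G(A\setminus X)<\infty$), one has $$G(A\setminus X)\le d(X)\cdot f(h).$$ Then $\liminf_{h\to\infty} f(h)/h^3 \ge 1/27$.
   Context: All sets are sets of integers $A\subseteq\mathbb{Z}$ with $|A\cap\mathbb{Z}_{<0}|<\infty$. Such a set $A$ is an asymptotic basis if for some positive integer $h$ the $h$-fold sumset $hA=\{a_1+\dots+a_h: a_i\in A\}$ contains all but finitely many non-negative integers; the least such $h$ is the order $G(A)$ (and $G(A)=\infty$ if no such $h$ exists). For a finite set $X$ of integers with at least two elements, $\mathrm{diam}(X)=\max X-\min X$, $\delta(X)=\gcd\{x-y: x,y\in X\}$, and $d(X)=\mathrm{diam}(X)/\delta(X)$. *)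

(* Defs.v *)
From Stdlib Require Import Reals ZArith List.
Import ListNotations.
Open Scope R_scope.

Definition zset := Z -> Prop.

Definition fin_neg (A : zset) : Prop :=
  exists l : list Z, forall x, A x -> (x < 0)%Z -> In x l.

Definition in_sumset (A : zset) (h : nat) (n : Z) : Prop :=
  exists l : list Z, length l = h /\ Forall A l /\ fold_right Z.add 0%Z l = n.

Definition basis_of_order (A : zset) (h : nat) : Prop :=
  exists M : Z, forall n : Z, (M <= n)%Z -> in_sumset A h n.

Definition is_order (A : zset) (k : nat) : Prop :=
  (1 <= k)%nat /\ basis_of_order A k /\
  forall j, (1 <= j < k)%nat -> ~ basis_of_order A j.

Definition G_le (A : zset) (h : nat) : Prop :=
  exists k, (1 <= k <= h)%nat /\ basis_of_order A k.

Definition G_finite (A : zset) : Prop :=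
  exists k, (1 <= k)%nat /\ basis_of_order A k.

(* Finite sets X are given as lists; membership is In. *)
Definition zlist_max (X : list Z) : Z := fold_right Z.max (hd 0%Z X) X.
Definition zlist_min (X : list Z) : Z := fold_right Z.min (hd 0%Z X) X.
Definition diam (X : list Z) : Z := (zlist_max X - zlist_min X)%Z.
Definition delta (X : list Z) : Z :=
  fold_right Z.gcd 0%Z (flat_map (fun x => map (fun y => (x - y)%Z) X) X).
Definition dX (X : list Z) : R := IZR (diam X) / IZR (delta X).

Definition two_elems (X : list Z) : Prop :=
  exists x y, In x X /\ In y X /\ x <> y.

Definition setminus (A : zset) (X : list Z) : zset := fun x => A x /\ ~ In x X.

Definition liminf_ge (u : nat -> R) (c : R) : Prop :=
  forall eps, eps > 0 -> exists N : nat, forall n, (N <= n)%nat -> c - eps <= u n.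

(* Main.v *)
Require Import Defs.
From Stdlib Require Import Reals ZArith List Lia Lra Psatz Classical.
Import ListNotations.
Open Scope R_scope.

Definition Aset (L : Z) : zset := fun x =>
  x = 0%Z \/ x = 1%Z \/ x = (L*L + L)%Z \/
  exists y, (0 <= y)%Z /\ x = (L*L + (L*L*L+1)*y)%Z.

Definition Xl : list Z := [0%Z; 1%Z].

Definition rep (x k : Z) : list Z := repeat x (Z.to_nat k).

Lemma rep_len x k : length (rep x k) = Z.to_nat k.
Proof. apply repeat_length. Qed.

Lemma rep_sum x k : (0 <= k)%Z -> fold_right Z.add 0%Z (rep x k) = (k * x)%Z.
Proof.
  intro Hk; unfold rep.
  assert (G : forall n, fold_right Z.add 0%Z (repeat x n) = (Z.of_nat n * x)%Z).
  { induction n as [|n IH]; [reflexivity|]. cbn [repeat fold_right]. rewrite IH, Nat2Z.inj_succ. ring. }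
  rewrite G, Z2Nat.id; lia.
Qed.

Lemma rep_forall (P : Z -> Prop) x k : P x -> Forall P (rep x k).
Proof.
  intro H; apply Forall_forall; intros y Hy; unfold rep in Hy.
  apply repeat_spec in Hy; subst; auto.
Qed.

Lemma sum_app l1 l2 : fold_right Z.add 0%Z (l1 ++ l2) =
  (fold_right Z.add 0%Z l1 + fold_right Z.add 0%Z l2)%Z.
Proof. induction l1; simpl; [lia|]. rewrite IHl1; lia. Qed.

Lemma A_basis L h : (2 <= L)%Z -> (3*L - 1 <= Z.of_nat h)%Z -> basis_of_order (Aset L) h.
Proof.
  intros HL Hh.
  set (m := (L*L*L+1)%Z).
  assert (Hm : (m > 0)%Z) by (unfold m; nia).
  exists (L*L + m)%Z. intros n Hn.
  set (r := ((n - L*L) mod m)%Z). set (Q := ((n - L*L) / m)%Z).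
  assert (HnQ : (n - L*L = m*Q + r)%Z) by (apply Z.div_mod; lia).
  assert (Hr : (0 <= r < m)%Z) by (apply Z.mod_pos_bound; lia).
  assert (HQ : (1 <= Q)%Z).
  { assert (0 < m*Q)%Z by lia. destruct (Z_le_gt_dec Q 0); [|lia]. nia. }
  set (r0 := (r mod L)%Z). set (q1 := (r / L)%Z).
  assert (Hrq : (r = L*q1 + r0)%Z) by (apply Z.div_mod; lia).
  assert (Hr0 : (0 <= r0 < L)%Z) by (apply Z.mod_pos_bound; lia).
  set (r1 := (q1 mod L)%Z). set (r2 := (q1 / L)%Z).
  assert (Hq1 : (q1 = L*r2 + r1)%Z) by (apply Z.div_mod; lia).
  assert (Hr1 : (0 <= r1 < L)%Z) by (apply Z.mod_pos_bound; lia).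
  assert (Hq1p : (0 <= q1)%Z) by (apply Z.div_pos; lia).
  assert (Hr2 : (0 <= r2 <= L)%Z).
  { split; [apply Z.div_pos; lia|].
    assert (L*L*r2 <= L*L*L)%Z.
    { assert (0 <= L*r1)%Z by nia. assert (L*q1 = L*L*r2 + L*r1)%Z by (rewrite Hq1; ring).
      unfold m in Hr; lia. }
    apply Z.mul_le_mono_pos_l with (L*L)%Z; nia. }
  assert (As : Aset L (L*L+L)%Z) by (right; right; left; reflexivity).
  assert (Ac : Aset L (L*L)%Z) by (right; right; right; exists 0%Z; split; lia).
  assert (A0 : Aset L 0%Z) by (left; reflexivity).
  assert (A1 : Aset L 1%Z) by (right; left; reflexivity).
  clearbody r0 r1 r2 q1 r Q. assert (Hmd : m = (L*L*L+1)%Z) by reflexivity. clearbody m.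
  destruct (Z_le_gt_dec r1 r2) as [Hc|Hc].
  - set (z := (Z.of_nat h - (r0 + r1 + (r2 - r1) + 1))%Z).
    exists (rep 0 z ++ rep 1 r0 ++ rep (L*L+L) r1 ++ rep (L*L) (r2 - r1) ++ [(L*L + m*Q)%Z]).
    split; [|split].
    + rewrite !length_app, !rep_len; simpl. unfold z. lia.
    + do 4 (apply Forall_app; split; [apply rep_forall; assumption|]).
      constructor; [|constructor]. right; right; right. exists Q; split; [lia|rewrite Hmd; reflexivity].
    + rewrite !sum_app, !rep_sum by (unfold z; lia). simpl.
      replace n with (L*L + m*Q + (L*(L*r2+r1) + r0))%Z by (rewrite <- Hq1, <- Hrq; lia). ring.
  - set (z := (Z.of_nat h - ((r0+1) + r1 + (r2 + L - r1) + 1))%Z).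
    exists (rep 0 z ++ rep 1 (r0+1) ++ rep (L*L+L) r1 ++ rep (L*L) (r2 + L - r1) ++ [(L*L + m*(Q-1))%Z]).
    split; [|split].
    + rewrite !length_app, !rep_len; simpl. unfold z. lia.
    + do 4 (apply Forall_app; split; [apply rep_forall; assumption|]).
      constructor; [|constructor]. right; right; right. exists (Q-1)%Z; split; [lia|rewrite Hmd; reflexivity].
    + rewrite !sum_app, !rep_sum by (unfold z; lia). simpl.
      replace n with (L*L + m*Q + (L*(L*r2+r1) + r0))%Z by (rewrite <- Hq1, <- Hrq; lia). rewrite Hmd; ring.
Qed.

Lemma SB_char L x : (2 <= L)%Z -> setminus (Aset L) Xl x ->
  x = (L*L+L)%Z \/ exists y, (0 <= y)%Z /\ x = (L*L + (L*L*L+1)*y)%Z.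
Proof.
  intros HL [HA HX]. destruct HA as [H|[H|[H|H]]]; auto; subst; exfalso; apply HX; simpl; auto.
Qed.

Lemma SB_s L : (2 <= L)%Z -> setminus (Aset L) Xl (L*L+L)%Z.
Proof.
  intros HL; split; [right; right; left; reflexivity|].
  simpl; intros [H|[H|[]]]; nia.
Qed.

Lemma SB_c L y : (2 <= L)%Z -> (0 <= y)%Z -> setminus (Aset L) Xl (L*L + (L*L*L+1)*y)%Z.
Proof.
  intros HL Hy; split; [right; right; right; exists y; auto|].
  simpl; intros [H|[H|[]]]; nia.
Qed.

Lemma B_basis L : (2 <= L)%Z -> basis_of_order (setminus (Aset L) Xl) (Z.to_nat (L*L*L+1)).
Proof.
  intros HL. set (m := (L*L*L+1)%Z).
  assert (Hm : (m > 0)%Z) by (unfold m; nia).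
  exists (m*L + m*L*L)%Z. intros n Hn.
  set (i := ((-(n*L*L)) mod m)%Z). set (q := ((-(n*L*L)) / m)%Z).
  assert (Hiq : (-(n*L*L) = m*q + i)%Z) by (apply Z.div_mod; lia).
  assert (Hi : (0 <= i < m)%Z) by (apply Z.mod_pos_bound; lia).
  assert (Hmd : m = (L*L*L+1)%Z) by reflexivity. clearbody i q m.
  set (y := (n + q*L - L*L)%Z).
  assert (HqL : (m*q*L = -(n*L*L*L) - i*L)%Z).
  { assert (H := f_equal (fun t => (t*L)%Z) Hiq). simpl in H. rewrite Z.mul_add_distr_r in H. lia. }
  assert (Hmn : (m*n = n*L*L*L + n)%Z) by (rewrite Hmd; ring).
  assert (Hy : (L*L + m*y = n - i*L - (m-1)*(L*L))%Z).
  { unfold y. replace (m*(n + q*L - L*L))%Z with (m*n + m*q*L - m*(L*L))%Z by ring. lia. }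
  assert (Hy0 : (0 <= y)%Z).
  { assert (HiL : (i*L < m*L)%Z) by (apply Z.mul_lt_mono_pos_r; lia).
    assert (m*y > 0)%Z.
    { replace (m*y)%Z with (L*L + m*y - L*L)%Z by ring. rewrite Hy.
      assert (m*L*L = m*(L*L))%Z by ring. lia. }
    assert (0 < y)%Z by (apply (Z.mul_pos_cancel_l m y); lia). lia. }
  exists (rep (L*L+L) i ++ rep (L*L) (m-1-i) ++ [(L*L + m*y)%Z]).
  split; [|split].
  - rewrite !length_app, !rep_len; simpl. lia.
  - apply Forall_app; split; [apply rep_forall; apply SB_s; auto|].
    apply Forall_app; split.
    + apply rep_forall. replace (L*L)%Z with (L*L + (L*L*L+1)*0)%Z by ring. apply SB_c; auto; lia.
    + constructor; [|constructor]. rewrite Hmd. apply SB_c; auto.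
  - rewrite !sum_app, !rep_sum by lia. simpl. rewrite Hy. ring.
Qed.


Lemma B_struct L l : (2 <= L)%Z -> Forall (setminus (Aset L) Xl) l ->
  exists i q, (0 <= i <= Z.of_nat (length l))%Z /\
    fold_right Z.add 0%Z l = (Z.of_nat (length l) * (L*L) + i*L + (L*L*L+1)*q)%Z.
Proof.
  intros HL HF; induction HF as [|x l Hx HF IH].
  - exists 0%Z, 0%Z; simpl; split; lia.
  - destruct IH as [i [q [Hi Hs]]]. cbn [length fold_right]. rewrite Nat2Z.inj_succ.
    destruct (SB_char L x HL Hx) as [->|[y [Hy ->]]].
    + exists (i+1)%Z, q; split; [lia|]. rewrite Hs; ring.
    + exists i, (q+y)%Z; split; [lia|]. rewrite Hs; ring.
Qed.

Lemma B_lower L k : (2 <= L)%Z -> (1 <= k)%nat -> basis_of_order (setminus (Aset L) Xl) k ->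
  (L*L*L <= Z.of_nat k)%Z.
Proof.
  intros HL Hk [M HM].
  set (m := (L*L*L+1)%Z). set (K := Z.of_nat k).
  assert (Hmd : m = (L*L*L+1)%Z) by reflexivity.
  destruct (Z_le_gt_dec (L*L*L) K) as [|Hc]; [auto|exfalso].
  assert (HL3 : (0 <= L*L*L)%Z) by nia.
  assert (Hm : (m > 0)%Z) by lia.
  set (n := (K*(L*L) + (K+1)*L + m*Z.abs M)%Z).
  assert (HnM : (M <= n)%Z).
  { unfold n. assert (0 <= K*(L*L))%Z by (apply Z.mul_nonneg_nonneg; lia).
    assert (0 <= (K+1)*L)%Z by (apply Z.mul_nonneg_nonneg; lia).
    assert (Z.abs M <= m*Z.abs M)%Z.
    { assert (0 <= (m-1)*Z.abs M)%Z by (apply Z.mul_nonneg_nonneg; lia). lia. }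
    lia. }
  destruct (HM n HnM) as [l [Hlen [HF Hsum]]].
  destruct (B_struct L l HL HF) as [i [q [Hi Hs]]].
  rewrite Hlen in Hi, Hs. fold K in Hi, Hs. rewrite <- Hmd in Hs.
  clearbody m K. clear HF HM.
  set (j := (K + 1 - i)%Z). set (w := (q - Z.abs M)%Z).
  assert (Hjw : (j*L = m*w)%Z).
  { unfold j, w. replace ((K+1-i)*L)%Z with ((K+1)*L - i*L)%Z by ring.
    replace (m*(q - Z.abs M))%Z with (m*q - m*Z.abs M)%Z by ring.
    unfold n in Hsum. lia. }
  assert (Hj : (1 <= j < m)%Z) by (unfold j; lia).
  assert (H2 : (j*L*(L*L) = m*w*(L*L))%Z) by (rewrite Hjw; ring).
  assert (H4 : (m*j - j*L*(L*L) = j)%Z) by (rewrite Hmd; ring).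
  assert (H3 : (j = m*(j - w*(L*L)))%Z).
  { replace (m*(j - w*(L*L)))%Z with (m*j - m*w*(L*L))%Z by ring. lia. }
  clearbody j w. set (z := (j - w*(L*L))%Z) in H3. clearbody z.
  destruct (Z_le_gt_dec z 0).
  - assert (m*z <= 0)%Z by nia. lia.
  - assert (m*1 <= m*z)%Z by (apply Z.mul_le_mono_nonneg_l; lia). lia.
Qed.

Lemma exists_order (B : zset) : G_finite B -> exists k, is_order B k.
Proof.
  intros [k0 [H1 H2]].
  assert (G : forall n k, (k <= n)%nat -> (1 <= k)%nat -> basis_of_order B k -> exists k', is_order B k').
  { induction n as [|n IH]; intros k Hkn Hk1 Hb; [lia|].
    destruct (classic (exists j, (1 <= j < k)%nat /\ basis_of_order B j)) as [[j [Hj Hbj]]|Hn].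
    - apply (IH j); auto; lia.
    - exists k; split; [auto|split; auto]. intros j Hj Hbj; apply Hn; eauto. }
  apply (G k0 k0); auto.
Qed.

Lemma dX_Xl : dX Xl = 1.
Proof.
  assert (H1 : diam Xl = 1%Z) by reflexivity.
  assert (H2 : delta Xl = 1%Z) by reflexivity.
  unfold dX; rewrite H1, H2. field.
Qed.

Theorem theorem1p2 (f : nat -> R) :
  (forall (h : nat) (A : zset) (X : list Z),
      (1 <= h)%nat -> fin_neg A -> G_le A h ->
      (forall x, In x X -> A x) -> two_elems X ->
      G_finite (setminus A X) ->
      forall k, is_order (setminus A X) k -> INR k <= dX X * f h) ->
  liminf_ge (fun h => f h / (INR h ^ 3)) (1 / 27).
Proof.
  intros Hf eps Heps.
  destruct (INR_unbounded (1/eps)) as [N0 HN0].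
  exists (N0 + 5)%nat. intros n Hn.
  set (Ln := ((n+1)/3)%nat).
  assert (HLn : (3*Ln <= n+1 /\ n+1 < 3*Ln+3)%nat).
  { pose proof (Nat.div_mod (n+1) 3 ltac:(lia)).
    pose proof (Nat.mod_upper_bound (n+1) 3 ltac:(lia)). fold Ln in H. lia. }
  set (L := Z.of_nat Ln).
  assert (HL : (2 <= L)%Z) by lia.
  destruct (exists_order (setminus (Aset L) Xl)) as [k Hk].
  { exists (Z.to_nat (L*L*L+1)); split; [lia|apply B_basis; auto]. }
  assert (Hkf : INR k <= dX Xl * f n).
  { apply (Hf n (Aset L) Xl); auto.
    - lia.
    - exists []. intros x Hx Hneg.
      destruct Hx as [->|[->|[->|[y [Hy ->]]]]]; nia.
    - exists n; split; [lia|]. apply A_basis; auto. lia.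
    - intros x [<-|[<-|[]]]; [left|right; left]; reflexivity.
    - exists 0%Z, 1%Z; simpl; repeat split; auto; discriminate.
    - exists (Z.to_nat (L*L*L+1)); split; [lia|apply B_basis; auto]. }
  rewrite dX_Xl, Rmult_1_l in Hkf.
  destruct Hk as [Hk1 [Hkb _]]. pose proof (B_lower L k HL Hk1 Hkb) as Hlow.
  assert (Hnat : (Ln*Ln*Ln <= k)%nat).
  { unfold L in Hlow. rewrite <- !Nat2Z.inj_mul in Hlow. lia. }
  apply le_INR in Hnat; rewrite !mult_INR in Hnat.
  assert (H3 : (n <= 3*Ln+1)%nat) by lia.
  apply le_INR in H3. rewrite plus_INR, mult_INR in H3. simpl in H3.
  assert (HnN : (N0 <= n)%nat) by lia. apply le_INR in HnN.
  assert (H5 : (5 <= n)%nat) by lia. apply le_INR in H5. simpl in H5.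
  set (x := INR n) in *. set (y := INR Ln) in *.
  assert (Hx : x > 1/eps) by lra.
  assert (Hex : eps * x >= 1).
  { assert (eps * (1/eps) = 1) by (field; lra).
    assert (eps * (1/eps) < eps * x) by (apply Rmult_lt_compat_l; lra). lra. }
  assert (Hy : (x-1)/3 <= y) by lra.
  assert (Hy3 : ((x-1)/3)^3 <= y^3) by (apply pow_incr; split; lra).
  assert (Hfy : y^3 <= f n) by (simpl; lra).
  assert (Hx3 : eps * x^3 >= x^2).
  { replace (eps * x^3) with ((eps*x) * x^2) by ring.
    assert (0 <= x^2) by (apply pow_le; lra). nra. }
  assert (Hkey : (1/27 - eps) * x^3 <= ((x-1)/3)^3).
  { replace (((x-1)/3)^3) with ((x^3 - 3*x^2 + 3*x - 1)/27) by field.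
    assert (x^2 = x*x) by ring. nra. }
  assert (Hxp : 0 < x^3) by (apply pow_lt; lra).
  apply Rmult_le_reg_r with (x^3); [auto|].
  unfold Rdiv at 2. rewrite Rmult_assoc, Rinv_l, Rmult_1_r by lra. lra.
Qed.
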